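(* Let $S$ be an $m\times n$ Gaussian embedding, let $\{x_t\}$ be generated by a pre-conditioned first-order method $x_t=x_{t-1}+\sum_{j=0}^{t-1}\alpha_{j,t}H_S^{-1}\nabla f(x_j)$ with deterministic coefficients independent of $n$, and let $p_t\in\mathbb{R}_t^0[X]$ be the polynomial with $\Delta_t=p_t(C_S^{-1})\Delta_0$, for which $\lim_{n\to\infty}\mathbb{E}\|\Delta_t\|^2/\mathbb{E}\|\Delta_0\|^2=\int_a^b p_t^2(\lambda^{-1})\mu_\rho(\lambda)\mathrm{d}\lambda$. Setting $P_t(x)=p_t\!\left(\frac{x}{(1-\rho)^2}\right)$, we have $$\lim_{n\to\infty}\frac{\mathbb{E}\|\Delta_t\|^2}{\mathbb{E}\|\Delta_0\|^2}=(1-\rho)\int_a^b P_t^2(x)\frac{1}{x}\mu_\rho(x)\,\mathrm{d}x.$$ Consequently, if $\{\Pi_t\}$ is a family of polynomials orthogonal with respect to $\mu_\rho$ with $\deg\Pi_t=t$ and $\Pi_t(0)=1$, then $\overline{\Pi}_t(x):=\Pi_t((1-\rho)^2x)$ achieves the minimum $\mathcal{L}^*_{\mu_\rho,t}=\min_{p\in\mathbb{R}_t^0[X]}\int p^2(\lambda^{-1})\mu_\rho(\lambda)\mathrm{d}\lambda$.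
   Context: Setting: $A\in\mathbb{R}^{n\times d}$ of rank $d$, $b\in\mathbb{R}^n$, $f(x)=\frac12\|Ax-b\|^2$, $x^*=\arg\min f$, $d/n\to\gamma\in(0,1)$, $m/n\to\xi\in(\gamma,1)$, $\rho=\gamma/\xi\in(0,1)$. $U$ is the $n\times d$ matrix of left singular vectors of $A$, $H_S=A^\top S^\top SA$, $C_S=U^\top S^\top SU$, $\Delta_t=U^\top A(x_t-x^* )$. A Gaussian embedding has i.i.d. $\mathcal{N}(0,1/m)$ entries. $x_0$ random, independent of $S$, mean zero, with bounded condition number of $U^\top A\mathbb{E}[x_0x_0^\top]A^\top U+U^\top bb^\top U$. $\mu_\rho(x)=\frac{\sqrt{(b-x)_+(x-a)_+}}{2\pi\rho x}$ is the Marchenko–Pastur density with $a=(1-\sqrt\rho)^2$, $b=(1+\sqrt\rho)^2$ (here $a,b$ denote these edges, not the vector $b$). $\mathbb{R}_t^0[X]$: real polynomials of degree at most $t$ with value $1$ at $0$. *)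

(* Defs.v *)
From Stdlib Require Import Reals.
From Coquelicot Require Import Coquelicot.
From mathcomp Require Import all_boot all_algebra.
From mathcomp Require Import Rstruct.

Set Implicit Arguments.
Unset Strict Implicit.
Unset Printing Implicit Defensive.

Local Open Scope R_scope.

Definition mp_a (rho : R) : R := (1 - sqrt rho) ^ 2.
Definition mp_b (rho : R) : R := (1 + sqrt rho) ^ 2.

Definition mp_density (rho x : R) : R :=
  sqrt (Rmax (mp_b rho - x) 0 * Rmax (x - mp_a rho) 0) / (2 * PI * rho * x).

Definition Rt0 (t : nat) (p : {poly R}) : Prop :=
  (size p <= t.+1)%N /\ horner p 0 = 1.

Definition Lcost (rho : R) (p : {poly R}) : R :=
  RInt (fun l => (horner p (Rinv l)) ^ 2 * mp_density rho l) (mp_a rho) (mp_b rho).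

Definition mp_orthogonal_family (rho : R) (Pi : nat -> {poly R}) : Prop :=
  (forall t, size (Pi t) = t.+1) /\
  (forall t, horner (Pi t) 0 = 1) /\
  (forall i j, i <> j ->
     RInt (fun x => horner (Pi i) x * horner (Pi j) x * mp_density rho x)
          (mp_a rho) (mp_b rho) = 0).

Definition rescale_poly (c : R) (P : {poly R}) : {poly R} :=
  (P \Po (c *: 'X))%R.

(* Main.v *)
Require Import Defs.
From Stdlib Require Import Reals Lra.
From Coquelicot Require Import Coquelicot.
From mathcomp Require Import all_boot all_algebra.
From mathcomp Require Import Rstruct.
Import GRing.Theory.
Local Open Scope R_scope.

Lemma mp_facts (rho : R) : 0 < rho < 1 ->
  0 < mp_a rho /\ mp_a rho < mp_b rho /\ mp_a rho * mp_b rho = (1 - rho) ^ 2.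
Proof.
  intros [H0 H1]. unfold mp_a, mp_b.
  set s := sqrt rho.
  assert (Hs : s * s = rho) by (apply sqrt_sqrt; lra).
  assert (Hs0 : 0 < s) by (apply sqrt_lt_R0; lra).
  assert (Hs1 : s < 1).
  { destruct (Rlt_or_le s 1) as [h|h]; auto. nra. }
  split; [|split].
  - assert (0 < 1 - s) by lra. nra.
  - nra.
  - rewrite <- Hs. ring.
Qed.

Definition d0 (rho x : R) : R :=
  sqrt ((mp_b rho - x) * (x - mp_a rho)) / (2 * PI * rho * x).

Lemma density_d0 (rho x : R) : mp_a rho <= x <= mp_b rho ->
  mp_density rho x = d0 rho x.
Proof.
  intros [h1 h2]. unfold mp_density, d0.
  rewrite Rmax_left; [|lra]. rewrite Rmax_left; [|lra]. reflexivity.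
Qed.

Lemma den_pos rho x : 0 < rho -> 0 < x -> 0 < 2 * PI * rho * x.
Proof.
  intros. pose proof PI_RGT_0.
  assert (0 < 2 * PI) by lra.
  assert (0 < 2 * PI * rho) by (apply Rmult_lt_0_compat; lra).
  apply Rmult_lt_0_compat; lra.
Qed.

Lemma d0_ge0 (rho x : R) : 0 < rho -> 0 < x -> 0 <= d0 rho x.
Proof.
  intros. unfold d0. apply Rmult_le_pos. apply sqrt_pos.
  apply Rlt_le, Rinv_0_lt_compat. apply den_pos; auto.
Qed.

Lemma cont_pow2 (h : R -> R) x : continuous h x -> continuous (fun y => h y ^ 2) x.
Proof.
  intros H.
  apply continuous_ext with (fun y => mult (h y) (mult (h y) 1)).
  { intros y. simpl. reflexivity. }
  apply (@continuous_mult _ R_AbsRing); auto. apply (@continuous_mult _ R_AbsRing); auto. apply continuous_const.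
Qed.

Lemma cont_horner (p : {poly R}) x : continuous (fun y => horner p y) x.
Proof.
  elim/poly_ind: p.
  - apply continuous_ext with (fun _ => 0).
    { intros y. rewrite horner0. reflexivity. }
    apply continuous_const.
  - intros p c IH.
    apply continuous_ext with (fun y => plus (mult (horner p y) y) c).
    { intros y. rewrite hornerMXaddC. reflexivity. }
    apply (@continuous_plus _ R_AbsRing). apply (@continuous_mult _ R_AbsRing); auto. apply continuous_id.
    apply continuous_const.
Qed.

Lemma cont_d0 rho x : 0 < rho -> 0 < x -> continuous (d0 rho) x.
Proof.
  intros Hr Hx. unfold d0.
  apply continuous_ext with
    (fun y => mult (sqrt ((mp_b rho - y) * (y - mp_a rho))) (/ (2 * PI * rho * y))).
  { intros y. reflexivity. }
  apply (@continuous_mult _ R_AbsRing).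
  - apply continuous_sqrt_comp. apply: ex_derive_continuous. auto_derive. auto.
  - apply continuous_Rinv_comp.
    apply: ex_derive_continuous. auto_derive. auto.
    apply Rgt_not_eq. apply den_pos; auto.
Qed.

Lemma ex_RInt_pos (f : R -> R) a b : 0 < a -> a <= b ->
  (forall x, 0 < x -> continuous f x) -> ex_RInt f a b.
Proof.
  intros Ha Hab H. apply (@ex_RInt_continuous R_CompleteNormedModule). intros z Hz.
  apply H. rewrite Rmin_left in Hz; lra.
Qed.
Lemma d0_inv rho y : 0 < rho < 1 -> mp_a rho < y < mp_b rho ->
  d0 rho ((1 - rho) ^ 2 / y) = (1 - rho) * y / (1 - rho) ^ 2 * d0 rho y.
Proof.
  intros Hr Hy. destruct (mp_facts _ Hr) as [Ha [Hab Hc]].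
  set a := mp_a rho in Ha Hab Hc Hy *. set b := mp_b rho in Ha Hab Hc Hy *.
  assert (Hy0 : 0 < y) by lra.
  assert (Hprod : (b - (1 - rho) ^ 2 / y) * ((1 - rho) ^ 2 / y - a)
          = (1 - rho) ^ 2 * ((b - y) * (y - a) * (/ y) ^ 2)).
  { rewrite <- Hc. field. lra. }
  unfold d0. fold a b. rewrite Hprod.
  rewrite sqrt_mult_alt; [|apply pow2_ge_0].
  rewrite sqrt_pow2; [|lra].
  rewrite sqrt_mult_alt; [|apply Rmult_le_pos; lra].
  rewrite sqrt_pow2; [|apply Rlt_le, Rinv_0_lt_compat; lra].
  have Hd := den_pos _ _ (proj1 Hr) Hy0.
  have Hpi := PI_RGT_0.
  field. repeat split; lra.
Qed.

Lemma cov rho (h : R -> R) : 0 < rho < 1 -> (forall y, continuous h y) ->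
  RInt (fun l => h (/ l) * d0 rho l) (mp_a rho) (mp_b rho)
  = (1 - rho) * RInt (fun x => h (x / (1 - rho) ^ 2) / x * d0 rho x) (mp_a rho) (mp_b rho).
Proof.
  intros Hr Hh. destruct (mp_facts _ Hr) as [Ha [Hab Hc]].
  set a := mp_a rho in Ha Hab Hc *. set b := mp_b rho in Ha Hab Hc *.
  set c := (1 - rho) ^ 2 in Hc *.
  assert (Hc0 : 0 < c) by (unfold c; apply pow_lt; lra).
  set F := fun l => h (/ l) * d0 rho l.
  set H := fun x => h (x / c) / x * d0 rho x.
  assert (contF : forall x, 0 < x -> continuous F x).
  { intros x Hx. unfold F.
    apply (@continuous_mult _ R_AbsRing).
    - apply (continuous_comp Rinv h). apply continuous_Rinv; lra. apply Hh.
    - apply cont_d0; lra. }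
  assert (contH : forall x, 0 < x -> continuous H x).
  { intros x Hx. unfold H.
    apply (@continuous_mult _ R_AbsRing); [|apply cont_d0; lra].
    apply (@continuous_mult _ R_AbsRing).
    - apply (continuous_comp (fun x => x / c) h); [|apply Hh].
      apply: ex_derive_continuous. auto_derive. auto.
    - apply continuous_Rinv; lra. }
  assert (exH : ex_RInt H a b) by (apply ex_RInt_pos; auto; lra).
  pose proof (RInt_comp F (fun y => c / y) (fun y => - c / y ^ 2) b a) as E1.
  cbv beta in E1.
  rewrite (_ : c / b = a) in E1; [|rewrite <- Hc; field; lra].
  rewrite (_ : c / a = b) in E1; [|rewrite <- Hc; field; lra].
  rewrite <- E1.
  2:{ intros x Hx. rewrite Rmin_right in Hx; [|lra]. rewrite Rmax_left in Hx; [|lra].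
      apply contF. apply Rdiv_lt_0_compat; lra. }
  2:{ intros x Hx. rewrite Rmin_right in Hx; [|lra]. rewrite Rmax_left in Hx; [|lra].
      split.
      - auto_derive. lra. field. lra.
      - apply: ex_derive_continuous. auto_derive. apply Rgt_not_eq; nra. }
  rewrite (RInt_ext _ (fun y => scal (- (1 - rho)) (H y))).
  2:{ intros x Hx. rewrite Rmin_right in Hx; [|lra]. rewrite Rmax_left in Hx; [|lra].
      unfold F, H. rewrite d0_inv; [|auto|exact Hx].
      rewrite (_ : / (c / x) = x / c); [|field; lra].
      unfold scal; simpl; unfold mult; simpl. unfold c. field. lra. }
  rewrite RInt_scal.
  2:{ apply ex_RInt_swap. exact exH. }
  rewrite <- (opp_RInt_swap _ _ _ exH).
  unfold scal; simpl; unfold mult; simpl.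
  change (Hierarchy.opp (RInt H a b)) with (- RInt H a b). ring.
Qed.

Definition ip rho (P : {poly R}) :=
  RInt (fun x => horner P x * d0 rho x) (mp_a rho) (mp_b rho).

Lemma ex_ip rho (P : {poly R}) : 0 < rho < 1 ->
  ex_RInt (fun x => horner P x * d0 rho x) (mp_a rho) (mp_b rho).
Proof.
  intros Hr. destruct (mp_facts _ Hr) as [Ha [Hab Hc]].
  apply ex_RInt_pos; try lra. intros x Hx.
  apply (@continuous_mult _ R_AbsRing). apply cont_horner. apply cont_d0; lra.
Qed.

Lemma ip_add rho (P Q : {poly R}) : 0 < rho < 1 -> ip rho (P + Q)%R = ip rho P + ip rho Q.
Proof.
  intros Hr. unfold ip.
  rewrite (RInt_ext _ (fun x => plus (horner P x * d0 rho x) (horner Q x * d0 rho x))).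
  2:{ intros x _. rewrite hornerD. unfold plus; simpl. rewrite -RplusE. ring. }
  rewrite RInt_plus; try apply ex_ip; auto.
Qed.

Lemma ip_scale rho k (P : {poly R}) : 0 < rho < 1 -> ip rho (k *: P)%R = k * ip rho P.
Proof.
  intros Hr. unfold ip.
  rewrite (RInt_ext _ (fun x => scal k (horner P x * d0 rho x))).
  2:{ intros x _. rewrite hornerZ. unfold scal; simpl; unfold mult; simpl. rewrite -RmultE. ring. }
  rewrite RInt_scal; try apply ex_ip; auto.
Qed.

Lemma ip_zero rho : ip rho 0%R = 0.
Proof.
  unfold ip. rewrite (RInt_ext _ (fun _ => 0)).
  2:{ intros x _. rewrite horner0. apply Rmult_0_l. }
  rewrite RInt_const. unfold scal; simpl; unfold mult; simpl. ring.
Qed.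

Lemma orth_ip rho (Pi : nat -> {poly R}) i j : 0 < rho < 1 ->
  mp_orthogonal_family rho Pi -> i <> j -> ip rho (Pi i * Pi j)%R = 0.
Proof.
  intros Hr [_ [_ Ho]] Hij. rewrite -(Ho i j Hij). unfold ip.
  apply RInt_ext. intros x Hx.
  destruct (mp_facts _ Hr) as [Ha [Hab Hc]].
  rewrite Rmin_left in Hx; [|lra]. rewrite Rmax_right in Hx; [|lra].
  rewrite density_d0; [|lra]. rewrite hornerM -RmultE. reflexivity.
Qed.

Lemma span rho (Pi : nat -> {poly R}) t : 0 < rho < 1 -> mp_orthogonal_family rho Pi ->
  forall k, (k <= t)%N -> forall r : {poly R}, (size r <= k)%N -> ip rho (Pi t * r)%R = 0.
Proof.
  intros Hr Hfam. have Hsz := proj1 Hfam.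
  elim => [|k IH] Hk r Hrs.
  - move: Hrs. rewrite leqn0 size_poly_eq0 => /eqP ->. rewrite mulr0. apply ip_zero.
  - set l := lead_coef (Pi k).
    have Hl : l != 0%R.
    { rewrite /l lead_coef_eq0 -size_poly_eq0 Hsz. by []. }
    set al := (r`_k / l)%R.
    set r' := (r - al *: Pi k)%R.
    have Hr' : (size r' <= k)%N.
    { apply/leq_sizeP => j Hj. rewrite /r' coefB coefZ.
      case: (ltngtP k j) => Hkj.
      - move/leq_sizeP: Hrs => Hrs. rewrite Hrs //.
        have Hp : (size (Pi k) <= j)%N by rewrite Hsz.
        move/leq_sizeP: Hp => Hp. rewrite Hp //. by rewrite mulr0 subrr.
      - exfalso. move: Hj. by rewrite leqNgt Hkj.
      - subst j. have Hlk : ((Pi k)`_k)%R = l by rewrite /l lead_coefE Hsz.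
        rewrite Hlk /al divfK; [by rewrite subrr|exact Hl]. }
    have -> : (Pi t * r = Pi t * r' + al *: (Pi t * Pi k))%R.
    { by rewrite /r' mulrBr scalerAr subrK. }
    rewrite ip_add // ip_scale // IH //; last by apply ltnW.
    rewrite (orth_ip _ _ _ _ Hr Hfam); [first [ring | lra | (rewrite mulr0 add0r //) | (rewrite Rmult_0_r Rplus_0_l //)]|].
    move=> E. move: Hk. rewrite E. by rewrite ltnn.
Qed.

Lemma Lcost_eq rho (p : {poly R}) : 0 < rho < 1 ->
  Lcost rho p = (1 - rho) *
    RInt (fun x => horner p (Rdiv x ((1 - rho) ^ 2)) ^ 2 / x * d0 rho x) (mp_a rho) (mp_b rho).
Proof.
  intros Hr. destruct (mp_facts _ Hr) as [Ha [Hab Hc]].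
  unfold Lcost.
  rewrite (RInt_ext _ (fun l => (fun y => horner p y ^ 2) (/ l) * d0 rho l)).
  2:{ intros x Hx. rewrite Rmin_left in Hx; [|lra]. rewrite Rmax_right in Hx; [|lra].
      rewrite density_d0; [|lra]. reflexivity. }
  apply (cov rho (fun y => horner p y ^ 2) Hr). intros y. apply cont_pow2, cont_horner.
Qed.

Lemma size_comp_lin (p : {poly R}) (k : R) n : k != 0%R -> (size p <= n.+1)%N ->
  (size (p \Po (k *: 'X))%R <= n.+1)%N.
Proof.
  intros Hk Hp. apply: leq_trans (size_comp_poly_leq _ _) _.
  rewrite size_scale // size_polyX /= muln1.
  move: Hp. case: (size p) => [|s] //=.
Qed.

Lemma main2 rho (Pi : nat -> {poly R}) t (q : {poly R}) : 0 < rho < 1 ->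
  mp_orthogonal_family rho Pi -> Rt0 t q ->
  Lcost rho (rescale_poly ((1 - rho) ^ 2) (Pi t)) <= Lcost rho q.
Proof.
  intros Hr Hfam [Hqs Hq0].
  destruct (mp_facts _ Hr) as [Ha [Hab Hc]].
  rewrite !Lcost_eq //.
  apply Rmult_le_compat_l; [lra|].
  set c := (1 - rho) ^ 2 in Hc *.
  assert (Hc0 : 0 < c) by (unfold c; apply pow_lt; lra).
  have Hcn : c != 0%R by apply/eqP; apply: Rgt_not_eq; exact Hc0.
  rewrite (RInt_ext _ (fun x => horner (Pi t) x ^ 2 / x * d0 rho x)).
  2:{ intros x _. unfold rescale_poly. rewrite horner_comp hornerZ hornerX.
      have E : c * Rdiv x c = x by field; lra.
      rewrite -RmultE E.
      reflexivity. }
  set Q := (q \Po (c^-1 *: 'X))%R.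
  have HQx : forall x, horner Q x = horner q (Rdiv x c).
  { intros x. rewrite /Q horner_comp hornerZ hornerX -RmultE -RinvE. f_equal.
    unfold Rdiv. apply Rmult_comm. }
  have HPi0 : horner (Pi t) 0 = 1 by apply (proj1 (proj2 Hfam)).
  have HD0 : root (Q - Pi t)%R 0.
  { rewrite /root hornerD hornerN HQx HPi0.
    rewrite (_ : Rdiv 0 c = 0); [|unfold Rdiv; apply Rmult_0_l].
    rewrite Hq0. by rewrite subrr. }
  move/factor_theorem: HD0 => [r Hr0].
  rewrite polyC0 subr0 in Hr0.
  have HQs : (size Q <= t.+1)%N.
  { apply size_comp_lin => //. by rewrite invr_eq0. }
  have HDs : (size (Q - Pi t)%R <= t.+1)%N.
  { apply/leq_sizeP => j Hj. rewrite coefB.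
    move/leq_sizeP: HQs => HQs. rewrite HQs //.
    have Hp : (size (Pi t) <= t.+1)%N by rewrite (proj1 Hfam).
    move/leq_sizeP: Hp => Hp. rewrite Hp //. by rewrite subrr. }
  have Hrs : (size r <= t)%N.
  { case: (eqVneq r 0%R) => [-> | Hrn]; first by rewrite size_poly0.
    move: HDs. by rewrite Hr0 size_mulX. }
  have HQ : forall x, horner q (Rdiv x c) = horner (Pi t) x + horner r x * x.
  { intros x. rewrite -HQx.
    have -> : Q = (Pi t + r * 'X)%R by rewrite -Hr0 addrC subrK.
    by rewrite hornerD hornerMX. }
  set A := fun x => horner (Pi t) x ^ 2 / x * d0 rho x.
  set B := fun x => horner (Pi t * r)%R x * d0 rho x.
  set C := fun x => horner r x ^ 2 * x * d0 rho x.
  assert (contA : forall x, 0 < x -> continuous A x).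
  { intros x Hx. unfold A.
    apply (@continuous_mult _ R_AbsRing); [|apply cont_d0; lra].
    apply (@continuous_mult _ R_AbsRing). apply cont_pow2, cont_horner.
    apply continuous_Rinv; lra. }
  assert (contC : forall x, 0 < x -> continuous C x).
  { intros x Hx. unfold C.
    apply (@continuous_mult _ R_AbsRing); [|apply cont_d0; lra].
    apply (@continuous_mult _ R_AbsRing). apply cont_pow2, cont_horner.
    apply continuous_id. }
  assert (exA : ex_RInt A (mp_a rho) (mp_b rho)) by (apply ex_RInt_pos; auto; lra).
  assert (exB : ex_RInt B (mp_a rho) (mp_b rho)) by (apply ex_ip; auto).
  assert (exC : ex_RInt C (mp_a rho) (mp_b rho)) by (apply ex_RInt_pos; auto; lra).
  rewrite (RInt_ext (fun x => horner q (Rdiv x c) ^ 2 / x * d0 rho x)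
             (fun x => plus (plus (A x) (scal 2 (B x))) (C x))).
  2:{ intros x Hx. rewrite Rmin_left in Hx; [|lra]. rewrite Rmax_right in Hx; [|lra].
      rewrite HQ. unfold plus, scal; simpl; unfold mult; simpl.
      unfold A, B, C. rewrite hornerM -RmultE.
      set P1 := horner (Pi t) x. set P2 := horner r x. set dd := d0 rho x.
      field. lra. }
  rewrite RInt_plus //.
  2:{ apply: ex_RInt_plus => //. apply: ex_RInt_scal => //. }
  rewrite RInt_plus //.
  2:{ apply: ex_RInt_scal => //. }
  rewrite RInt_scal //.
  have HB0 : RInt B (mp_a rho) (mp_b rho) = 0.
  { apply (span _ _ _ Hr Hfam t (leqnn t) _ Hrs). }
  have HC0 : 0 <= RInt C (mp_a rho) (mp_b rho).
  { apply RInt_ge_0; try lra; auto. intros x Hx. unfold C.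
    apply Rmult_le_pos; [apply Rmult_le_pos; [apply pow2_ge_0|lra]|].
    apply d0_ge0; lra. }
  rewrite HB0. unfold plus, scal; simpl; unfold mult; simpl. lra.
Qed.

Theorem lemma3 (gamma xi : R) (t : nat) :
  0 < gamma -> gamma < xi -> xi < 1 ->
  let rho := gamma / xi in
  (forall (p : {poly R}) (ratio : nat -> R),
     Rt0 t p ->
     is_lim_seq ratio (Lcost rho p) ->
     is_lim_seq ratio
       ((1 - rho) *
        RInt (fun x => (horner p (Rdiv x ((1 - rho) ^ 2))) ^ 2 * / x * mp_density rho x)
             (mp_a rho) (mp_b rho)))
  /\
  (forall Pi : nat -> {poly R},
     mp_orthogonal_family rho Pi ->
     let Pibar := rescale_poly ((1 - rho) ^ 2) (Pi t) in
     Rt0 t Pibar /\ (forall q, Rt0 t q -> Lcost rho Pibar <= Lcost rho q)).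
Proof.
  intros Hg Hgx Hx rho.
  have Hr : 0 < rho < 1.
  { unfold rho. split.
    - apply Rdiv_lt_0_compat; lra.
    - apply (Rmult_lt_reg_r xi); [lra|]. unfold Rdiv.
      rewrite Rmult_assoc Rinv_l; lra. }
  split.
  - intros p ratio _ Hlim. rewrite (Lcost_eq rho p Hr) in Hlim.
    destruct (mp_facts _ Hr) as [Ha [Hab Hc]].
    rewrite (RInt_ext _ (fun x => horner p (Rdiv x ((1 - rho) ^ 2)) ^ 2 / x * d0 rho x)).
    { exact Hlim. }
    intros x Hx'. rewrite Rmin_left in Hx'; [|lra]. rewrite Rmax_right in Hx'; [|lra].
    rewrite density_d0; [reflexivity|lra].
  - intros Pi Hfam Pibar. split.
    + split.
      * apply size_comp_lin.
        -- apply/eqP. apply: Rgt_not_eq. apply pow_lt. lra.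
        -- by rewrite (proj1 Hfam).
      * rewrite /Pibar /rescale_poly horner_comp hornerZ hornerX mulr0.
        apply (proj1 (proj2 Hfam)).
    + intros q Hq. apply main2; auto.
Qed.
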